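(* Let $A$ be a commutative $\mathbb Q$-algebra, $a\in A$ a non-zero-divisor, $B=A[z]$ and $\mathcal D=\partial_z-a:B\to B$, $h\mapsto h'-ah$. Let $f=c_0+c_1z+\cdots+c_dz^d\in B$ be such that $v_a(c_i)\ge i$ for $0\le i\le d$, and such that for some $t\le d$ we have $v_a(c_t)\ge t+1$. Put $\tilde f=f-c_tz^t$. If $f^m\in\mathrm{Im}\,\mathcal D$ for some $m\ge1$, then $\tilde f^m\in\mathrm{Im}\,\mathcal D$.
   Context: For $c\in A$, the $a$-order $v_a(c)\in\mathbb Z_{\ge0}\cup\{\infty\}$ is the supremum of the integers $m\ge0$ with $c\in Aa^m$ (so $v_a(c)=\infty$ if $c\in\bigcap_{m\ge1}Aa^m$). *)

(* Defs.v *)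
From HB Require Import structures.
From mathcomp Require Import all_boot all_order all_algebra.
Set Implicit Arguments. Unset Strict Implicit. Unset Printing Implicit Defensive.
Import GRing.Theory.
Local Open Scope ring_scope.

Definition in_pow_ideal (A : comAlgType rat) (a c : A) (m : nat) : Prop :=
  exists r : A, c = r * a ^+ m.

(* v_a(c) >= i, where v_a(c) = sup { m | c \in A a^m } in N u {oo}:
   the supremum is >= i iff some m >= i has c \in A a^m. *)
Definition vord_ge (A : comAlgType rat) (a c : A) (i : nat) : Prop :=
  exists m : nat, (i <= m)%N /\ in_pow_ideal a c m.

Definition in_imD (A : comAlgType rat) (a : A) (f : {poly A}) : Prop :=
  exists h : {poly A}, h^`() - a%:P * h = f.

(* Main.v *)
Require Import Defs.
From HB Require Import structures.
From mathcomp Require Import all_boot all_order all_algebra.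
Local Open Scope ring_scope.
Import GRing.Theory.

Set Implicit Arguments.
Section Aux.
Variables (A : comAlgType rat) (a : A).

Definition Adm (e : nat) (g : {poly A}) :=
  forall k : nat, exists r : A, g`_k = r * a ^+ (k + e).

Lemma Adm0 e : Adm e 0.
Proof. by move=> k; exists 0; rewrite coef0 mul0r. Qed.

Lemma AdmD e p q : Adm e p -> Adm e q -> Adm e (p + q).
Proof.
move=> hp hq k; have [r hr] := hp k; have [s hs] := hq k.
by exists (r + s); rewrite coefD hr hs mulrDl.
Qed.

Lemma AdmN e p : Adm e p -> Adm e (- p).
Proof. by move=> hp k; have [r hr] := hp k; exists (- r); rewrite coefN hr mulNr. Qed.

Lemma AdmB e p q : Adm e p -> Adm e q -> Adm e (p - q).
Proof. by move=> hp hq; apply: AdmD => //; apply: AdmN. Qed.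

Lemma AdmW e p : Adm e.+1 p -> Adm e p.
Proof.
by move=> hp k; have [r hr] := hp k; exists (r * a); rewrite hr addnS exprS mulrA.
Qed.

Lemma Adm1 : Adm 0 1.
Proof.
move=> k; rewrite coef1; case: k => [|k] /=.
  by exists 1; rewrite mul1r expr0.
by exists 0; rewrite mul0r.
Qed.

Lemma AdmM e e' p q : Adm e p -> Adm e' q -> Adm (e + e') (p * q).
Proof.
move=> hp hq k; rewrite coefM.
have : forall j : 'I_k.+1, exists r, p`_j * q`_(k - j) = r * a ^+ (k + (e + e')).
  move=> [j hj] /=; have [r hr] := hp j; have [s hs] := hq (k - j)%N.
  exists (r * s); rewrite hr hs mulrACA -exprD; congr (_ * _ ^+ _).
  rewrite addnACA subnKC //.
move=> H.
elim/big_ind: _ => //.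
- by exists 0; rewrite mul0r.
- by move=> x y [r ->] [s ->]; exists (r + s); rewrite mulrDl.
Qed.

Lemma AdmX n p : Adm 0 p -> Adm 0 (p ^+ n).
Proof.
move=> hp; elim: n => [|n IH]; first by rewrite expr0; exact: Adm1.
by rewrite exprS; have := @AdmM 0 0 _ _ hp IH; rewrite addn0.
Qed.

Lemma AdmXX x y n : Adm 0 x -> Adm 0 y -> Adm 1 (x - y) -> Adm 1 (x ^+ n - y ^+ n).
Proof.
move=> hx hy hxy; elim: n => [|n IH]; first by rewrite subrr; exact: Adm0.
have -> : x ^+ n.+1 - y ^+ n.+1 = x * (x ^+ n - y ^+ n) + (x - y) * y ^+ n.
  by rewrite !exprS mulrBr mulrBl addrA subrK.
apply: AdmD; first exact: (@AdmM 0 1 _ _ hx IH).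
have := @AdmM 1 0 _ _ hxy (AdmX n hy); by rewrite addn0.
Qed.

Lemma imD0 : in_imD a 0.
Proof. by exists 0; rewrite deriv0 mulr0 subr0. Qed.

Lemma imDD p q : in_imD a p -> in_imD a q -> in_imD a (p + q).
Proof.
move=> [h <-] [g <-]; exists (h + g); rewrite derivD mulrDr.
by rewrite addrACA opprD.
Qed.

Lemma imD_mono k : forall c : A, in_imD a ((c * a ^+ k.+1) *: 'X^k).
Proof.
elim: k => [|k IH] c.
  exists (- c%:P); rewrite derivN derivC oppr0 sub0r mulrN opprK expr1 expr0.
  by rewrite alg_polyC -polyCM mulrC.
have [h0 hh0] := IH (k.+1%:R * c).
exists (h0 - (c * a ^+ k.+1) *: 'X^(k.+1)).
rewrite derivB derivZ derivXn /= mulrBr opprB addrA.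
rewrite -addrA (addrC (a%:P * _)) addrA (addrAC (h0^`())) hh0.
rewrite -scalerMnr scalerMnl -[k.+1%:R * c * _]mulrA mulr_natl -mulrnAl subrr add0r mul_polyC scalerA.
by rewrite mulrCA -exprS.
Qed.

Lemma imD_Adm g : Adm 1 g -> in_imD a g.
Proof.
move=> hg; rewrite -[g]coefK poly_def.
elim/big_ind: _ => //; [exact: imD0 | exact: imDD |].
move=> [k hk] _ /=; have [r ->] := hg k.
by rewrite addn1; apply: imD_mono.
Qed.

End Aux.

Theorem lemma2p13 (A : comAlgType rat) (a : A)
  (ha : forall x : A, a * x = 0 -> x = 0)
  (d : nat) (f : {poly A}) (hdeg : (size f <= d.+1)%N)
  (hc : forall i : nat, (i <= d)%N -> vord_ge a f`_i i)
  (t : nat) (ht : (t <= d)%N) (hct : vord_ge a f`_t t.+1)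
  (m : nat) (hm : (1 <= m)%N) :
  in_imD a (f ^+ m) -> in_imD a ((f - (f`_t)%:P * 'X^t) ^+ m).
Proof.
have vord : forall c i, vord_ge a c i -> exists r, c = r * a ^+ i.
  move=> c i [n [hin [r ->]]]; exists (r * a ^+ (n - i)).
  by rewrite -mulrA -exprD subnK.
have hf : Adm a 0 f.
  move=> k; rewrite addn0; case: (leqP k d) => hk.
    exact: vord (hc _ hk).
  by exists 0; rewrite mul0r nth_default // (leq_trans hdeg hk).
have hdiff : Adm a 1 (f - (f`_t)%:P * 'X^t - f).
  rewrite addrAC subrr add0r mul_polyC => k.
  rewrite coefN coefZ coefXn; case: eqP => [->|_].
    have [r hr] := vord _ _ hct; exists (- r).
    by rewrite mulr1 hr addn1 mulNr.
  by exists 0; rewrite mulr0 oppr0 mul0r.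
have hft : Adm a 0 (f - (f`_t)%:P * 'X^t).
  have := AdmD (AdmW hdiff) hf; by rewrite subrK.
move=> [h hh].
have := imD_Adm (AdmXX m hft hf hdiff).
move=> [g hg]; exists (g + h).
by rewrite derivD mulrDr opprD addrACA hg hh subrK.
Qed.
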